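(* If $G$ is a graph on $n$ vertices with independence number $\alpha\geq 1$, then $\operatorname{th}_{\operatorname{H}}(G)\leq\lceil n-\alpha+2\sqrt{\alpha}-1\rceil$.
   Context: All graphs are finite, simple and undirected. Hopping color change rule: a blue vertex $v$ may force a white vertex $w$ to become blue if $v$ has not previously performed a force and every neighbor of $v$ is blue. For an initial blue set $B$, a chronological list of forces of $B$ is a sequence of such forces applied one at a time until no further force is possible; its underlying unordered set is a set of forces of $B$. $B$ is a hopping forcing set if some chronological list of forces of $B$ turns all vertices blue. For a set of forces $\mathcal F$ of $B$, let $\mathcal F^{(0)}=B$ and for $t\geq1$ let $\mathcal F^{(t)}$ be the set of vertices $w\notin U_{t-1}:=\bigcup_{i=0}^{t-1}\mathcal F^{(i)}$ for which there is $(v\to w)\in\mathcal F$ with $v\in U_{t-1}$ and all neighbors of $v$ in $U_{t-1}$. $\operatorname{pt}_{\operatorname{H}}(G;\mathcal F)$ is the least $t$ with $\bigcup_{i=0}^t\mathcal F^{(i)}=V(G)$ ($\infty$ if none); $\operatorname{pt}_{\operatorname{H}}(G;B)$ is the minimum of $\operatorname{pt}_{\operatorname{H}}(G;\mathcal F)$ over sets of forces $\mathcal F$ of $B$ ($\infty$ if $B$ is not a hopping forcing set). $\operatorname{th}_{\operatorname{H}}(G)=\min_{B\subseteq V(G)}\big(|B|+\operatorname{pt}_{\operatorname{H}}(G;B)\big)$. *)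

(* Defs.v *)
From HB Require Import structures.
From mathcomp Require Import all_boot all_order all_algebra.
From mathcomp Require Import reals.
From Stdlib Require Import ClassicalEpsilon.
Set Implicit Arguments. Unset Strict Implicit. Unset Printing Implicit Defensive.

Section Hopping.
Variables (T : finType) (e : rel T).

Definition simple_graph : Prop := symmetric e /\ irreflexive e.

Definition independent (S : {set T}) : bool :=
  [forall x in S, forall y in S, ~~ e x y].
Definition alpha : nat := \max_(S : {set T} | independent S) #|S|.

(* In state (U = blue vertices, S = vertices that already performed a force),
   v may force w under the hopping rule. *)
Definition can_force (U S : {set T}) (v w : T) : bool :=
  [&& v \in U, w \notin U, v \notin S & [forall u, e v u ==> (u \in U)]].

Fixpoint chron (U S : {set T}) (s : seq (T * T)) : bool :=
  match s with
  | [::] => ~~ [exists v, exists w, can_force U S v w]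
  | (v, w) :: s' => can_force U S v w && chron (w |: U) (v |: S) s'
  end.

Definition chronological_list (B : {set T}) (s : seq (T * T)) : bool :=
  chron B set0 s.

Definition forces_set (B : {set T}) (F : {set T * T}) : Prop :=
  exists s, chronological_list B s /\ F = [set x in s].

Definition hopping_forcing_set (B : {set T}) : Prop :=
  exists s, chronological_list B s /\
    B :|: [set w | w \in [seq x.2 | x <- s]] = [set: T].

(* U_t = F^(0) ∪ ... ∪ F^(t) *)
Fixpoint Ublue (B : {set T}) (F : {set T * T}) (t : nat) : {set T} :=
  match t with
  | 0 => B
  | t'.+1 =>
      let U := Ublue B F t' in
      U :|: [set w | (w \notin U) &&
               [exists v, [&& (v, w) \in F, v \in U &
                              [forall u, e v u ==> (u \in U)]]]]
  end.

End Hopping.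

(* least element of a (nonempty) set of naturals; chosen classically *)
Definition nmin (P : nat -> Prop) : nat :=
  epsilon (inhabits 0) (fun n => P n /\ forall m, P m -> n <= m).

(* pt_H(G;F) (meaningful when finite) *)
Definition pt_forces (T : finType) (e : rel T) (B : {set T}) (F : {set T * T}) : nat :=
  nmin (fun t => Ublue e B F t = [set: T]).

Definition pt_forces_finite (T : finType) (e : rel T) (B : {set T}) (F : {set T * T}) : Prop :=
  exists t, Ublue e B F t = [set: T].

(* pt_H(G;B): minimum over sets of forces F of B with finite pt_H(G;F)
   (meaningful when B is a hopping forcing set) *)
Definition pt_H (T : finType) (e : rel T) (B : {set T}) : nat :=
  nmin (fun t => exists F, forces_set e B F /\ pt_forces_finite e B F /\
                           t = pt_forces e B F).

(* th_H(G) = min over B (with pt_H(G;B) finite, i.e. hopping forcing sets)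
   of |B| + pt_H(G;B) *)
Definition th_H (T : finType) (e : rel T) : nat :=
  nmin (fun k => exists B : {set T}, hopping_forcing_set e B /\ k = #|B| + pt_H e B).

(* Main.v *)
Require Import Defs.
From HB Require Import structures.
From mathcomp Require Import all_boot all_order all_algebra.
From mathcomp Require Import reals zify ring lra.
From Stdlib Require Import ClassicalEpsilon Classical.
Import Order.TTheory GRing.Theory Num.Theory.
Set Implicit Arguments. Unset Strict Implicit. Unset Printing Implicit Defensive.

Lemma exists_min (P : nat -> Prop) n : P n -> exists m, P m /\ forall k, P k -> m <= k.
Proof.
elim: n {-2}n (leqnn n) => [|N IH] n Hn Pn.
  exists n; split=> // k _; move: Hn; rewrite leqn0 => /eqP ->; done.
destruct (classic (exists m, m < n /\ P m)) as [[m [Hm Pm]]|H].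
  apply: (IH m) => //; by rewrite -ltnS (leq_trans Hm Hn).
exists n; split=> // k Pk; rewrite leqNgt; apply/negP => Hk; apply: H; by exists k.
Qed.

Lemma nminP (P : nat -> Prop) n : P n -> P (nmin P) /\ nmin P <= n.
Proof.
move=> Pn; have Ex := exists_min Pn.
have [H1 H2] := epsilon_spec (inhabits 0) (fun n => P n /\ forall m, P m -> n <= m) Ex.
rewrite /nmin; split=> //; exact: H2.
Qed.

Section G.
Variables (T : finType) (e : rel T).

Lemma Ublue_sub B s t :
  Ublue e B [set x in s] t \subset B :|: [set w | w \in [seq x.2 | x <- s]].
Proof.
elim: t => [|t IH] /=; first exact: subsetUl.
rewrite subUset IH /=; apply/subsetP => w; rewrite !inE => /andP[_ /existsP[v /and3P[Hv _ _]]].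
apply/orP; right; apply/mapP; exists (v, w) => //; by rewrite inE in Hv.
Qed.

Lemma th_bound B s t :
  chronological_list e B s -> Ublue e B [set x in s] t = [set: T] ->
  th_H e <= #|B| + t.
Proof.
move=> Hc Hu.
have Hh : hopping_forcing_set e B.
  exists s; split=> //; apply/eqP; rewrite eqEsubset subsetT /= -Hu; exact: Ublue_sub.
have Hf : pt_forces e B [set x in s] <= t by have [] := @nminP (fun t => Ublue e B [set x in s] t = [set: T]) _ Hu.
have Hp : pt_H e B <= t.
  pose P := (fun t => exists F, forces_set e B F /\ pt_forces_finite e B F /\
                           t = pt_forces e B F).
  have HP : P (pt_forces e B [set x in s]).
    by exists [set x in s]; split; [exists s | split; [exists t|]].
  have [_ H] := @nminP P _ HP.
  exact: leq_trans H Hf.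
pose P := (fun k => exists B : {set T}, hopping_forcing_set e B /\ k = #|B| + pt_H e B).
have HP : P (#|B| + pt_H e B) by exists B.
have [_ H] := @nminP P _ HP.
apply: leq_trans H _; by rewrite leq_add2l.
Qed.
End G.
Section Chain.
Variables (T : finType) (e : rel T) (S : {set T}) (x0 : T) (k : nat).
Hypothesis indep : independent e S.
Hypothesis k1 : 0 < k.
Let s := enum S.
Let a := #|S|.

Lemma size_s : size s = a. Proof. by rewrite /s /a cardE. Qed.
Lemma idx_nth i : i < a -> index (nth x0 s i) s = i.
Proof. move=> H; apply: index_uniq; [by rewrite size_s | exact: enum_uniq]. Qed.
Lemma nth_in i : i < a -> nth x0 s i \in S.
Proof. by move=> H; rewrite -mem_enum mem_nth // size_s. Qed.
Lemma idx_notin x : x \notin S -> index x s = a.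
Proof. by move=> H; rewrite -size_s memNindex // mem_enum. Qed.
Lemma idx_in x : x \in S -> index x s < a.
Proof. by move=> H; rewrite -size_s index_mem mem_enum. Qed.
Lemma nth_idx x : x \in S -> nth x0 s (index x s) = x.
Proof. by move=> H; rewrite nth_index // mem_enum. Qed.

Lemma nbr_out v u : v \in S -> e v u -> u \notin S.
Proof.
move=> Hv Hvu; apply/negP => Hu.
by move/forallP: indep => /(_ v); rewrite Hv /= => /forallP /(_ u); rewrite Hu Hvu.
Qed.

Definition U m := [set x | (x \notin S) || (index x s < m + k)].
Definition Q m := [set x | index x s < m].
Definition L m d := [seq (nth x0 s j, nth x0 s (j + k)) | j <- iota m d].

Lemma chron_L d m : m + k + d = a -> chron e (U m) (Q m) (L m d).
Proof.
elim: d m => [|d IH] m Hm /=.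
  apply/negP => /existsP[v /existsP[w /and4P[_ Hw _ _]]].
  move: Hw; rewrite inE negb_or negbK => /andP[Hw]; rewrite addn0 in Hm.
  by rewrite Hm idx_in.
have Hmk : m + k < a by rewrite -Hm addnS ltnS leq_addr.
have Hma : m < a by apply: leq_ltn_trans Hmk; exact: leq_addr.
apply/andP; split.
  apply/and4P; split.
  - by rewrite inE idx_nth //; apply/orP; right; rewrite -addn1 leq_add2l.
  - by rewrite inE negb_or negbK nth_in // idx_nth // ltnn.
  - by rewrite inE idx_nth // ltnn.
  - apply/forallP => u; apply/implyP => Hu; rewrite inE (nbr_out (nth_in Hma) Hu) //.
have -> : nth x0 s (m + k) |: U m = U m.+1.
  apply/setP => x; rewrite !inE addSn ltnS.
  case: (boolP (x \in S)) => Hx /=; last by rewrite orbT.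
  rewrite [in RHS]leq_eqVlt; congr (_ || _).
  by apply/eqP/eqP => [->|<-]; [rewrite idx_nth | rewrite nth_idx].
have -> : nth x0 s m |: Q m = Q m.+1.
  apply/setP => x; rewrite !inE ltnS [in RHS]leq_eqVlt.
  congr (_ || _); apply/eqP/eqP => [->|Heq]; [by rewrite idx_nth | ].
  case: (boolP (x \in S)) => Hx; first by rewrite -Heq nth_idx.
  by move: Hma; rewrite -Heq (idx_notin Hx) ltnn.
apply: IH; by rewrite addSn -Hm addnS.
Qed.

Lemma ublue_L t x : (x \notin S) || (index x s < k * t.+1) ->
  x \in Ublue e (U 0) [set y in L 0 (a - k)] t.
Proof.
elim: t x => [|t IH] x /=.
  by rewrite muln1 inE add0n.
move=> Hx; rewrite inE; case Hu: (x \in _) => //=.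
case: (boolP (x \in S)) => HS; last by rewrite IH ?HS in Hu.
have Hi : k * t.+1 <= index x s.
  by rewrite leqNgt; apply/negP => H; rewrite IH ?H ?orbT in Hu.
rewrite HS /= in Hx.
have Ha := idx_in HS.
rewrite inE Hu /=; apply/existsP; exists (nth x0 s (index x s - k)).
have Hv : index x s - k < a by lia.
apply/and3P; split.
- rewrite inE; apply/mapP; exists (index x s - k).
    rewrite mem_iota; lia.
  rewrite subnK ?nth_idx //; lia.
- apply: IH; rewrite idx_nth //; apply/orP; right; lia.
- apply/forallP => u; apply/implyP => Hu'; apply: IH.
  by rewrite (nbr_out (nth_in Hv) Hu').
Qed.

Lemma chron_all : k <= a -> chronological_list e (U 0) (L 0 (a - k)).
Proof. move=> H; apply: chron_L; lia. Qed.

Lemma ublue_all t : a <= k * t.+1 -> Ublue e (U 0) [set y in L 0 (a - k)] t = [set: T].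
Proof.
move=> H; apply/setP => x; rewrite inE; apply: ublue_L.
case: (boolP (x \in S)) => //= HS; have := idx_in HS; lia.
Qed.

Lemma card_U0 : #|U 0| <= #|~: S| + k.
Proof.
have Hsub : U 0 \subset ~: S :|: [set nth x0 s (val i) | i : 'I_k].
  apply/subsetP => x; rewrite !inE add0n; case: (boolP (x \in S)) => //= HS Hk.
  apply/imsetP; exists (Ordinal Hk) => //=; by rewrite nth_idx.
apply: leq_trans (subset_leq_card Hsub) _.
apply: leq_trans (leq_card_setU _ _) _; rewrite leq_add2l.
by apply: leq_trans (leq_imset_card _ _) _; rewrite card_ord.
Qed.
End Chain.
Section RP.
Local Open Scope ring_scope.
Lemma real_part (R : realType) (n a k t : nat) :
  (a <= n)%N -> ((k + t) * (k + t) < 4 * a)%N ->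
  ((n - a + k + t)%N%:Z <= Num.ceil (n%:R - a%:R + 2 * Num.sqrt (a%:R) - 1 : R)).
Proof.
move=> Han Hsq.
have H1 : ((n - a + k + t)%N%:Z - 1 < Num.ceil (n%:R - a%:R + 2 * Num.sqrt (a%:R) - 1 : R)).
  rewrite ceil_gt_int.
  rewrite rmorphB /= -[(_ + _)%N%:Z%:~R]/((_ + _)%N%:R) !natrD natrB //.
  have Hs := sqrtr_ge0 (a%:R : R).
  have Hq : Num.sqrt (a%:R : R) ^+ 2 = a%:R by rewrite sqr_sqrtr // ler0n.
  have Hsq' : ((k + t)%:R * (k + t)%:R < 4 * a%:R :> R).
    by rewrite -natrM -[4]/(4%:R) -natrM ltr_nat.
  rewrite natrD in Hsq'.
  have Hk : (0 <= k%:R :> R) by rewrite ler0n.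
  have Ht : (0 <= t%:R :> R) by rewrite ler0n.
  rewrite expr2 in Hq.
  nra.
move: H1; set c := Num.ceil _; lia.
Qed.
End RP.

Theorem proposition3p10 (R : realType) (T : finType) (e : rel T) :
  simple_graph e -> (1 <= alpha e)%N ->
  ((th_H e)%:Z <=
     Num.ceil (#|T|%:R - (alpha e)%:R + 2 * Num.sqrt ((alpha e)%:R) - 1 : R))%R.
Proof.
move=> _ Ha.
have [S HSi HSa] : {S : {set T} | S \in [pred S | independent e S] & alpha e = #|S|}.
  rewrite /alpha; apply: eq_bigmax_cond.
  apply/card_gt0P; exists set0; rewrite inE /independent.
  by apply/forallP => x; rewrite inE.
rewrite inE /= in HSi.
rewrite HSa in Ha *.
set a := #|S| in Ha *.
have [x0 _] : exists x, x \in S by apply/set0Pn; rewrite -card_gt0.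
have Hex : exists k, (a <= k * k)%N by exists a; nia.
case: (ex_minnP Hex) => k Hk Hmin.
have Hk1 : (0 < k)%N by move: Hk; case: k {Hmin} => //=; lia.
have Hk2 : ((k - 1) * (k - 1) < a)%N.
  rewrite ltnNge; apply/negP => H; have := Hmin _ H; lia.
have Hka : (k <= a)%N by have := Hmin a ltac:(nia); lia.
have [t [Ht1 Ht2]] : exists t, (a <= k * t.+1)%N /\ ((k + t) * (k + t) < 4 * a)%N.
  case: (leqP a (k * (k - 1))) => H.
    exists (k - 2); split; [| nia].
    have Hk' : (2 <= k)%N by move: H; case: k {Hmin Hk Hk1 Hk2 Hka} => [|[|k]] //=; lia.
    by have -> : (k - 2).+1 = (k - 1)%N by lia.
  exists (k - 1); split; [ | nia].
  by have -> : (k - 1).+1 = k by lia.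
have Hth := th_bound (chron_all x0 HSi Hk1 Hka) (ublue_all x0 HSi Hk1 Ht1). 
have Hc := card_U0 S x0 k.
have HC := cardsC S.
have Han : (a <= #|T|)%N by exact: max_card.
have Hle : (th_H e <= #|T| - a + k + t)%N.
  move: Hth Hc HC; rewrite -/a; set u := #|U S k 0|; set c := #|~: S|; set th := th_H e; lia.
apply: le_trans (real_part R Han Ht2).
rewrite lez_nat; exact: Hle.
Qed.
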